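(* Let $\mathbf A\in\mathbb R^{n\times p}$ with columns $\mathbf a_1,\dots,\mathbf a_p$, let $\mathbf y\in\mathbb R^n$, let $\mathbf w$ be a weight vector as in the context and $\Delta:=\min\{w_l-w_{l+1}: l=1,\dots,p-1\}$. Let $\widehat{\mathbf x}$ be any minimizer of $$\|\mathbf A\mathbf x-\mathbf y\|_1+\Omega_{\mathbf w}(\mathbf x)$$ over $\mathbf x\in\mathbb R^p$. Then for every pair of columns $(i,j)$ for which $\|\operatorname{sign}(\widehat x_i)\mathbf a_i-\operatorname{sign}(\widehat x_j)\mathbf a_j\|_1<\Delta$, we have $|\widehat x_i|=|\widehat x_j|$.
   Context: $\mathbf w=(w_1,\dots,w_p)\in\mathbb R^p_+$ satisfies $w_1\ge w_2\ge\cdots\ge w_p\ge0$ and $w_1>0$. The ordered weighted $\ell_1$ (OWL) norm is $\Omega_{\mathbf w}(\mathbf x)=\sum_{i=1}^p w_i|x|_{[i]}$, where $|x|_{[i]}$ denotes the $i$-th largest component of $\mathbf x$ in magnitude. $\operatorname{sign}$ denotes the sign function. *)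

(* Defs.v *)
From HB Require Import structures.
From mathcomp Require Import all_boot all_order all_algebra.
Set Implicit Arguments. Unset Strict Implicit. Unset Printing Implicit Defensive.
Import Order.TTheory GRing.Theory Num.Theory.
Local Open Scope ring_scope.

Section OWL.
Variable R : realFieldType.

Definition sorted_abs (p : nat) (x : 'cV[R]_p) : seq R :=
  sort (fun a b : R => b <= a) [seq `|x i 0| | i <- enum 'I_p].

Definition owl (p : nat) (w : 'I_p -> R) (x : 'cV[R]_p) : R :=
  \sum_(i < p) w i * (sorted_abs x)`_i.

Definition l1norm (n : nat) (v : 'cV[R]_n) : R := \sum_(k < n) `|v k 0|.

Definition owl_obj (n p : nat) (A : 'M[R]_(n, p)) (y : 'cV[R]_n)
  (w : 'I_p -> R) (x : 'cV[R]_p) : R :=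
  l1norm (A *m x - y) + owl w x.

(* consecutive gaps w_l - w_{l+1}, l = 1..p-1 (0-based: l = 0..p-2) *)
Definition owl_gaps (p : nat) (w : 'I_p -> R) : seq R :=
  let ws := [seq w i | i <- enum 'I_p] in
  [seq ws`_l - ws`_l.+1 | l <- iota 0 p.-1].

(* Delta = min{w_l - w_{l+1}}; (conventionally 0 when p <= 1, where the set is empty) *)
Definition owl_Delta (p : nat) (w : 'I_p -> R) : R :=
  \big[Num.min/head 0 (owl_gaps w)]_(g <- owl_gaps w) g.

End OWL.

(* Main.v *)
Require Import Defs.
From HB Require Import structures.
From mathcomp Require Import all_boot all_order all_algebra.
Import Order.TTheory GRing.Theory Num.Theory.
Local Open Scope ring_scope.
From mathcomp Require Import ring lra.
Set Implicit Arguments. Unset Strict Implicit.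
Section H.
Variable R : realFieldType.
Local Notation ge_rel := (fun a b : R => b <= a).
Local Notation srt := (sort (fun a b : R => b <= a)).

Lemma ge_tr : transitive (T:=R) ge_rel.
Proof. by move=> x y z /= Hyx Hzy; apply: le_trans Hzy Hyx. Qed.
Lemma ge_anti : antisymmetric (T:=R) ge_rel.
Proof. by move=> x y /andP[H1 H2]; apply/eqP; rewrite eq_le H1 H2. Qed.
Lemma ge_total : total (T:=R) ge_rel.
Proof. by move=> x y /=; rewrite orbC; apply: le_total. Qed.
Lemma ge_refl : reflexive (T:=R) ge_rel.
Proof. by move=> x /=. Qed.

Lemma mono (s : seq R) k l : sorted ge_rel s -> (k <= l)%N -> (l < size s)%N ->
  nth 0 s l <= nth 0 s k.
Proof.
move=> Hs Hkl Hl.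
have := sorted_leq_nth ge_tr ge_refl 0 Hs; apply => //.
by rewrite inE (leq_ltn_trans Hkl Hl).
Qed.
Arguments mono {s k l}.

Lemma perm_set_nth (u s : seq R) i m d : perm_eq u s -> (i < size u)%N -> (m < size s)%N ->
  nth 0 u i = nth 0 s m -> perm_eq (set_nth 0 u i d) (set_nth 0 s m d).
Proof.
move=> Hp Hi Hm Hc.
rewrite !set_nthE Hi Hm.
have Hu : perm_eq u (nth 0 u i :: (take i u ++ drop i.+1 u)).
  rewrite -{1}(cat_take_drop i u) (drop_nth 0 Hi).
  by rewrite -cat1s perm_catCA.
have Hs : perm_eq s (nth 0 s m :: (take m s ++ drop m.+1 s)).
  rewrite -{1}(cat_take_drop m s) (drop_nth 0 Hm).
  by rewrite -cat1s perm_catCA.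
have H : perm_eq (take i u ++ drop i.+1 u) (take m s ++ drop m.+1 s).
  rewrite -(perm_cons (nth 0 u i)) -(permPl Hu) (permPl Hp) Hc.
  exact: Hs.
rewrite -cat1s perm_catCA /= perm_sym -cat1s perm_catCA /= perm_cons perm_sym.
exact: H.
Qed.

Lemma sort_set (u s : seq R) i m d : perm_eq u s -> sorted ge_rel s ->
  (i < size u)%N -> (m < size s)%N -> nth 0 u i = nth 0 s m ->
  sorted ge_rel (set_nth 0 s m d) -> srt (set_nth 0 u i d) = set_nth 0 s m d.
Proof.
move=> Hp Hs Hi Hm Hc Hs'.
apply: (sorted_eq ge_tr ge_anti) => //; first exact: (sort_sorted ge_total).
by rewrite perm_sort; apply: perm_set_nth.
Qed.

Lemma dec_sorted (s : seq R) c e : sorted ge_rel s -> c \in s -> 0 < e ->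
  (forall z, z \in s -> z < c -> z <= c - e) ->
  exists m, [/\ m.+1 = find (fun z => z < c) s, (m < size s)%N, nth 0 s m = c &
     sorted ge_rel (set_nth 0 s m (c - e))].
Proof.
move=> Hs Hc He Hz.
set N := find _ s.
have Hq : (index c s < size s)%N by rewrite index_mem.
have Hnq := nth_index 0 Hc.
have qN : (index c s < N)%N.
  rewrite ltnNge; apply/negP => HN.
  have HNs : (N < size s)%N by apply: leq_ltn_trans HN Hq.
  have := HNs; rewrite -has_find => /(nth_find 0) /=.
  have := mono Hs HN Hq; rewrite Hnq => H1 H2.
  by have := le_lt_trans H1 H2; rewrite ltxx.
have N0 : (0 < N)%N by apply: leq_ltn_trans qN.
exists N.-1; rewrite prednK //.
have mN : (N.-1 < N)%N by rewrite prednK.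
have HmS : (N.-1 < size s)%N by apply: leq_trans mN (find_size _ _).
have Hnm : nth 0 s N.-1 = c.
  apply/eqP; rewrite eq_le; apply/andP; split.
    rewrite -Hnq; apply: mono => //; by rewrite -ltnS prednK.
  by have := before_find 0 mN => /= /negbT; rewrite -leNgt.
split => //; first exact: find_size.
apply/(sortedP (0:R)) => k; rewrite size_set_nth (maxn_idPr HmS) => Hk.
rewrite !nth_set_nth /=.
case: (eqVneq k N.-1) => [Ek|Nk].
  have Hk1 : k.+1 != N.-1 by rewrite Ek eqn_leq ltnn.
  rewrite (negbTE Hk1) Ek prednK //.
  have HNs : (N < size s)%N by rewrite -(prednK N0) -Ek.
  apply: Hz; first by apply: mem_nth.
  by have := HNs; rewrite -has_find => /(nth_find 0).
case: (eqVneq k.+1 N.-1) => [Ek1|Nk1].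
  have kN : (k < N)%N by rewrite -(prednK N0) -Ek1.
  have := before_find 0 kN => /= /negbT; rewrite -leNgt => H.
  by apply: le_trans H; rewrite lerBlDr lerDl ltW.
by have /(sortedP (0:R)) := Hs; apply.
Qed.

Lemma inc_sorted (s : seq R) c e : sorted ge_rel s -> c \in s -> 0 <= e ->
  (forall z, z \in s -> c < z -> c + e <= z) ->
  exists m, [/\ m = find (fun z => z <= c) s, (m < size s)%N, nth 0 s m = c &
     sorted ge_rel (set_nth 0 s m (c + e))].
Proof.
move=> Hs Hc He Hz.
set N := find _ s.
have Hq : (index c s < size s)%N by rewrite index_mem.
have Hnq := nth_index 0 Hc.
have Nq : (N <= index c s)%N.
  rewrite leqNgt; apply/negP => HN.
  by have := before_find 0 HN => /=; rewrite Hnq lexx.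
have HNs : (N < size s)%N by apply: leq_ltn_trans Nq Hq.
have HnN : nth 0 s N = c.
  apply/eqP; rewrite eq_le; apply/andP; split.
    by have := HNs; rewrite -has_find => /(nth_find 0).
  by rewrite -{1}Hnq; apply: mono.
exists N; split => //.
apply/(sortedP (0:R)) => k; rewrite size_set_nth (maxn_idPr HNs) => Hk.
rewrite !nth_set_nth /=.
case: (eqVneq k N) => [Ek|Nk].
  have Hk1 : k.+1 != N by rewrite Ek eqn_leq ltnn.
  rewrite (negbTE Hk1) Ek.
  apply: (@le_trans _ _ c); last by rewrite lerDl.
  rewrite -HnN; apply: mono => //; by rewrite -Ek.
case: (eqVneq k.+1 N) => [Ek1|Nk1].
  have kN : (k < N)%N by rewrite -Ek1.
  have := before_find 0 kN => /= /negbT; rewrite -ltNge => H.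
  by apply: Hz => //; apply: mem_nth; apply: ltn_trans Hk.
by have /(sortedP (0:R)) := Hs; apply.
Qed.


Lemma sum_set_nth p (w : 'I_p -> R) (s : seq R) m d (Hm : (m < p)%N) :
  size s = p ->
  \sum_(k < p) w k * (set_nth 0 s m d)`_k =
  \sum_(k < p) w k * s`_k + w (Ordinal Hm) * (d - s`_m).
Proof.
move=> Hs.
rewrite (bigD1 (Ordinal Hm)) //= [X in _ = X + _](bigD1 (Ordinal Hm)) //=.
rewrite nth_set_nth /= eqxx.
rewrite (eq_bigr (fun k => w k * s`_k)); last first.
  move=> k Hk; rewrite nth_set_nth /=.
  by have -> : (nat_of_ord k == m) = (k == Ordinal Hm) by []; rewrite (negbTE Hk).
by ring.
Qed.

Lemma nth_map_enum p (f : 'I_p -> R) (x0 : R) k (Hk : (k < p)%N) :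
  nth x0 [seq f l | l <- enum 'I_p] k = f (Ordinal Hk).
Proof.
rewrite (nth_map (Ordinal Hk)) ?size_enum_ord //.
have E1 := nth_ord_enum (Ordinal Hk) (Ordinal Hk).
simpl in E1; by rewrite E1.
Qed.

Lemma bigmin_le (s : seq R) x0 g : g \in s -> \big[Num.min/x0]_(z <- s) z <= g.
Proof.
elim: s => // a s IH; rewrite inE big_cons => /orP[/eqP ->|Hg].
  by rewrite ge_min lexx.
by rewrite ge_min IH ?orbT.
Qed.

Lemma Delta_le p (w : 'I_p -> R) l (Hl : (l.+1 < p)%N) :
  owl_Delta w <= w (Ordinal (ltnW Hl)) - w (Ordinal Hl).
Proof.
rewrite /owl_Delta; apply: bigmin_le.
rewrite /owl_gaps.
have -> : w (Ordinal (ltnW Hl)) - w (Ordinal Hl) =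
   [seq w i | i <- enum 'I_p]`_l - [seq w i | i <- enum 'I_p]`_l.+1.
  by rewrite (@nth_map_enum p w 0 l (ltnW Hl)) (@nth_map_enum p w 0 l.+1 Hl).
apply: (map_f (fun l => _ - _)); rewrite mem_iota add0n.
by rewrite -subn1 ltn_subRL addnC addn1.
Qed.

Lemma exists_eps (L : seq R) : all (fun z => 0 < z) L ->
  exists e, 0 < e /\ all (fun z => e <= z) L.
Proof.
elim: L => [|a L IH] /=; first by exists 1.
case/andP=> Ha /IH [e [He HL]].
exists (Num.min a e); split; first by rewrite lt_min Ha He.
rewrite ge_min lexx /=; apply/allP => z Hz; rewrite ge_min.
by move/allP: HL => /(_ z Hz) ->; rewrite orbT.
Qed.

Lemma abs_sub_sg (x e : R) : 0 <= e -> e <= `|x| -> `|x - e * Num.sg x| = `|x| - e.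
Proof.
move=> He; case: (ltrgt0P x) => Hx0 Hx.
- have H : 0 <= x - e by lra.
  by rewrite gtr0_sg // mulr1 ger0_norm.
- have H : x + e <= 0 by lra.
  by rewrite ltr0_sg // mulrN1 opprK ler0_norm // opprD.
- have E : e = 0 by lra.
  by rewrite E Hx0 mul0r subr0 normr0.
Qed.

Lemma abs_add_sg (x e : R) : 0 <= e -> x != 0 -> `|x + e * Num.sg x| = `|x| + e.
Proof.
move=> He; case: (ltrgt0P x) => Hx0 // _.
- have H : 0 <= x + e by lra.
  by rewrite gtr0_sg // mulr1 ger0_norm.
- have H : x - e <= 0 by lra.
  by rewrite ltr0_sg // mulrN1 ler0_norm // opprD opprK.
Qed.

Lemma l1_sub n (v d : 'cV[R]_n) e : 0 <= e -> l1norm (v - e *: d) <= l1norm v + e * l1norm d.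
Proof.
move=> He; rewrite /l1norm mulr_sumr -big_split /=; apply: ler_sum => k _.
rewrite !mxE; apply: le_trans (ler_normB _ _) _.
by rewrite normrM ger0_norm.
Qed.

Lemma l1_opp n (v : 'cV[R]_n) : l1norm (- v) = l1norm v.
Proof. by rewrite /l1norm; apply: eq_bigr => k _; rewrite mxE normrN. Qed.

Lemma nth_absmap p (x : 'cV[R]_p) k (Hk : (k < p)%N) :
  [seq `|x l 0| | l <- enum 'I_p]`_k = `|x (Ordinal Hk) 0|.
Proof.
rewrite (nth_map (Ordinal Hk)) ?size_enum_ord //.
have E1 := nth_ord_enum (Ordinal Hk) (Ordinal Hk).
simpl in E1; by rewrite E1.
Qed.


Lemma mem_set_nth_or (u : seq R) i d z : (i < size u)%N -> z \in set_nth 0 u i d -> z = d \/ z \in u.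
Proof.
move=> Hi; rewrite set_nthE Hi mem_cat inE => /orP[Hz|/orP[/eqP->|Hz]]; [right|by left|right].
  exact: mem_take Hz.
exact: mem_drop Hz.
Qed.


Lemma nth_absmap' p (x : 'cV[R]_p) (k : 'I_p) :
  [seq `|x l 0| | l <- enum 'I_p]`_k = `|x k 0|.
Proof.
rewrite (@nth_map_enum p (fun l => `|x l 0|) 0 k (ltn_ord k)).
by congr (`|x _ 0|); apply: val_inj.
Qed.

Lemma main_lt (n p : nat)
  (A : 'M[R]_(n, p)) (y : 'cV[R]_n) (w : 'I_p -> R)
  (w_noninc : forall i j : 'I_p, (i <= j)%N -> w j <= w i)
  (w_nonneg : forall i : 'I_p, 0 <= w i)
  (xh : 'cV[R]_p)
  (xh_min : forall x : 'cV[R]_p, owl_obj A y w xh <= owl_obj A y w x)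
  (i j : 'I_p) :
  `|xh j 0| < `|xh i 0| ->
  l1norm (Num.sg (xh i 0) *: col i A - Num.sg (xh j 0) *: col j A) < owl_Delta w ->
  False.
Proof.
move=> Hab HD.
set a := `|xh i 0|; set b := `|xh j 0|.
set d := Num.sg (xh i 0) *: col i A - Num.sg (xh j 0) *: col j A.
have ij : i != j by apply/eqP => E; move: Hab; rewrite /a /b E ltxx.
have Hb0 : 0 <= b by exact: normr_ge0.
set u := [seq `|xh k 0| | k <- enum 'I_p].
have Hsu : size u = p by rewrite size_map size_enum_ord.
have Hui : u`_i = a by rewrite nth_absmap'.
have Huj : u`_j = b by rewrite nth_absmap'.
have Hiu : (i < size u)%N by rewrite Hsu.
have Hju : (j < size u)%N by rewrite Hsu.
pose L := (a - b) / 2 :: [seq a - z | z <- u & z < a] ++ [seq z - b | z <- u & b < z].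
have Hall : all (fun z => 0 < z) L.
  rewrite /= divr_gt0 ?subr_gt0 //=; apply/allP => z; rewrite mem_cat => /orP[]/mapP[t].
    by rewrite mem_filter => /andP[Ht _] ->; rewrite subr_gt0.
  by rewrite mem_filter => /andP[Ht _] ->; rewrite subr_gt0.
have [e [He HL]] := exists_eps Hall.
move/allP: HL => HL.
have Heab : e <= (a - b) / 2 by apply: HL; rewrite inE eqxx.
have Hea z : z \in u -> z < a -> z <= a - e.
  move=> Hz Hza; have : e <= a - z.
    apply: HL; rewrite inE mem_cat; apply/orP; right; apply/orP; left.
    by apply/mapP; exists z => //; rewrite mem_filter Hza.
  lra.
have Heb z : z \in u -> b < z -> b + e <= z.
  move=> Hz Hza; have : e <= z - b.
    apply: HL; rewrite inE mem_cat; apply/orP; right; apply/orP; right.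
    by apply/mapP; exists z => //; rewrite mem_filter Hza.
  lra.
have He0 : 0 <= e by apply: ltW.
have Hea' : e <= a by lra.
set x' := xh - e *: (Num.sg (xh i 0) *: delta_mx i 0 - Num.sg (xh j 0) *: delta_mx j 0).
have Hx'k k : x' k 0 = xh k 0 - e * (Num.sg (xh i 0) * (i == k)%:R - Num.sg (xh j 0) * (j == k)%:R).
  by rewrite !mxE !eqxx !andbT (eq_sym k i) (eq_sym k j).
have Hx'i : `|x' i 0| = a - e.
  have ji : j != i by rewrite eq_sym.
  rewrite Hx'k eqxx (negbTE (ji)) mulr1 mulr0 subr0; exact: abs_sub_sg.
have Hx'o k : k != i -> k != j -> x' k 0 = xh k 0.
  move=> Hki Hkj; rewrite Hx'k eq_sym (negbTE Hki) eq_sym (negbTE Hkj) !mulr0 subr0 mulr0 subr0.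
  by [].
have Hres : l1norm (A *m x' - y) <= l1norm (A *m xh - y) + e * l1norm d.
  have -> : A *m x' - y = (A *m xh - y) - e *: d.
    rewrite /x' /d mulmxBr -scalemxAr mulmxBr -!scalemxAr -!colE.
    by rewrite addrAC.
  exact: l1_sub.
suff Howl : owl w x' <= owl w xh - e * owl_Delta w.
  have := xh_min x'; rewrite /owl_obj.
  have : e * l1norm d < e * owl_Delta w by rewrite ltr_pM2l.
  lra.
have ji : j != i by rewrite eq_sym.
have Hp0 : (0 < p)%N by apply: leq_ltn_trans (ltn_ord i).
rewrite /owl /sorted_abs -/u.
set s := srt u.
have Hps : perm_eq u s by rewrite perm_sym perm_sort.
have Hss : sorted (fun a b : R => b <= a) s by apply: (sort_sorted ge_total).
have Hsize : size s = p by rewrite size_sort.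
have Has : a \in s by rewrite mem_sort -Hui mem_nth.
have Hea_s : forall z, z \in s -> z < a -> z <= a - e by move=> z; rewrite mem_sort; exact: Hea.
have [m [Hfind Hm Hsm Hsorted1]] := dec_sorted Hss Has He Hea_s.
set s1 := set_nth 0 s m (a - e).
set u1 := set_nth 0 u i (a - e).
have E1 : srt u1 = s1 by apply: sort_set => //; rewrite Hui Hsm.
have Hmp : (m < p)%N by rewrite -Hsize.
have Hbef k : (k <= m)%N -> a <= s`_k.
  move=> Hk; have : (k < m.+1)%N by rewrite ltnS.
  by rewrite Hfind => /(before_find 0) /= /negbT; rewrite -leNgt.
have Hsu1 : size u1 = p by rewrite size_set_nth Hsu (maxn_idPr (ltn_ord i)).
have Howl_s : \sum_(k < p) w k * (srt u1)`_k = \sum_(k < p) w k * s`_k - e * w (Ordinal Hmp).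
  by rewrite E1 (@sum_set_nth p w s m (a - e) Hmp Hsize) Hsm; ring.
have ij' : (nat_of_ord i == j) = false by apply: negbTE ij.
have ji' : (nat_of_ord j == i) = false by apply: negbTE ji.
case: (eqVneq (xh j 0) 0) => Hxj.
  have Hu' : [seq `|x' k 0| | k <- enum 'I_p] = u1.
    apply: (@eq_from_nth _ 0); first by rewrite size_map size_enum_ord Hsu1.
    move=> k; rewrite size_map size_enum_ord => Hk.
    rewrite (@nth_map_enum p (fun l => `|x' l 0|) 0 k Hk) nth_set_nth /=.
    rewrite (@nth_map_enum p (fun l => `|xh l 0|) 0 k Hk).
    have -> : (k == i) = (Ordinal Hk == i) by [].
    case: eqVneq => [->|Hki] //.
    by rewrite Hx'k Hxj sgr0 mul0r (eq_sym i) (negbTE Hki) mulr0 subr0 mulr0 subr0.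
  rewrite Hu' Howl_s.
  have Hb0' : b = 0 by rewrite /b Hxj normr0.
  have Hm1 : (m.+1 < p)%N.
    rewrite Hfind -Hsize -has_find; apply/hasP; exists b.
      by rewrite mem_sort -Huj mem_nth.
    by rewrite Hab.
  have HDm : owl_Delta w <= w (Ordinal Hmp).
    have := Delta_le w Hm1.
    have -> : Ordinal (ltnW Hm1) = Ordinal Hmp by apply: val_inj.
    have := w_nonneg (Ordinal Hm1); lra.
  have := ler_wpM2l He0 HDm; lra.
have Hx'j : `|x' j 0| = b + e.
  rewrite Hx'k eqxx (negbTE ij) mulr0 mulr1 sub0r mulrN opprK; exact: abs_add_sg.
have Hu1j : u1`_j = b by rewrite nth_set_nth /= ji'.
have Hb1 : b \in s1 by rewrite -E1 mem_sort -Hu1j mem_nth // Hsu1.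
have Heb_s1 : forall z, z \in s1 -> b < z -> b + e <= z.
  move=> z; rewrite -E1 mem_sort => /(mem_set_nth_or Hiu) [->|Hz] Hbz.
    lra.
  exact: Heb.
have [N [HN HNs Hs1N Hsorted2]] := inc_sorted Hsorted1 Hb1 He0 Heb_s1.
have Hsize1 : size s1 = p by rewrite size_set_nth Hsize (maxn_idPr Hmp).
have Hju1 : (j < size u1)%N by rewrite Hsu1.
have E2 : srt (set_nth 0 u1 j (b + e)) = set_nth 0 s1 N (b + e).
  apply: sort_set => //; last by rewrite Hu1j Hs1N.
  by rewrite -E1 perm_sym perm_sort.
have Hu' : [seq `|x' k 0| | k <- enum 'I_p] = set_nth 0 u1 j (b + e).
  apply: (@eq_from_nth _ 0); first by rewrite size_map size_enum_ord size_set_nth Hsu1 (maxn_idPr (ltn_ord j)).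
  move=> k; rewrite size_map size_enum_ord => Hk.
  rewrite (@nth_map_enum p (fun l => `|x' l 0|) 0 k Hk) nth_set_nth /= nth_set_nth /=.
  rewrite (@nth_map_enum p (fun l => `|xh l 0|) 0 k Hk).
  have -> : (k == j) = (Ordinal Hk == j) by [].
  case: eqVneq => [->|Hkj] //.
  have -> : (k == i) = (Ordinal Hk == i) by [].
  case: eqVneq => [->|Hki] //.
  by rewrite Hx'o.
have HNp : (N < p)%N by rewrite -Hsize1.
have Hmn : (m < N)%N.
  rewrite ltnNge; apply/negP => HNm.
  have : b < s1`_N.
    rewrite /s1 nth_set_nth /=; case: eqP => _; first lra.
    exact: lt_le_trans Hab (Hbef _ HNm).
  by rewrite Hs1N ltxx.
have Hm1 : (m.+1 < p)%N by apply: leq_ltn_trans Hmn HNp.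
rewrite Hu' E2 (@sum_set_nth p w s1 N (b + e) HNp Hsize1) Hs1N -E1 Howl_s.
have HDm : owl_Delta w <= w (Ordinal Hmp) - w (Ordinal HNp).
  have := Delta_le w Hm1.
  have -> : Ordinal (ltnW Hm1) = Ordinal Hmp by apply: val_inj.
  have := w_noninc (Ordinal Hm1) (Ordinal HNp) Hmn; lra.
have := ler_wpM2l He0 HDm; lra.
Qed.
End H.
Unset Implicit Arguments.

Theorem theorem3 (R : realFieldType) (n p : nat)
  (A : 'M[R]_(n, p)) (y : 'cV[R]_n) (w : 'I_p -> R)
  (w_noninc : forall i j : 'I_p, (i <= j)%N -> w j <= w i)
  (w_nonneg : forall i : 'I_p, 0 <= w i)
  (w_first_pos : exists i : 'I_p, nat_of_ord i = 0%N /\ 0 < w i)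
  (xh : 'cV[R]_p)
  (xh_min : forall x : 'cV[R]_p, owl_obj A y w xh <= owl_obj A y w x) :
  forall i j : 'I_p,
    l1norm (Num.sg (xh i 0) *: col i A - Num.sg (xh j 0) *: col j A)
      < owl_Delta w ->
    `|xh i 0| = `|xh j 0|.
Proof.
move=> i j HD.
case: (ltgtP `|xh i 0| `|xh j 0|) => // H; exfalso.
- apply: (@main_lt R n p A y w w_noninc w_nonneg xh xh_min j i H).
  by rewrite -l1_opp opprB.
- exact: (@main_lt R n p A y w w_noninc w_nonneg xh xh_min i j H HD).
Qed.
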